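(* Let $d\ge2$ and let $\theta_{d0},\theta_{d-1,1},\dots,\theta_{0d}$ be real numbers with $\theta_{d0}\neq0$. Let $P(\theta)$ be the $(2d-2)\times(2d-2)$ matrix defined as follows: for $k=1,\dots,d-1$ and $m=0,\dots,d-1$, the entry in row $k$, column $k+m$ is $(d-m)\theta_{d-m,m}$; the entry in row $d-1+k$, column $k+m$ is $(m+1)\theta_{d-1-m,m+1}$; all other entries are $0$. (Thus the first $d-1$ rows are successive shifts of $(d\theta_{d0},(d-1)\theta_{d-1,1},\dots,2\theta_{2,d-2},\theta_{1,d-1})$ and the last $d-1$ rows are successive shifts of $(\theta_{d-1,1},2\theta_{d-2,2},\dots,d\theta_{0d})$.) Let $p(x;\theta)=\theta_{d0}x^d+\theta_{d-1,1}x^{d-1}+\dots+\theta_{1,d-1}x+\theta_{0d}$, and let $R(p,p')$ be the determinant of the $(2d-1)\times(2d-1)$ matrix whose first $d-1$ rows are successive shifts of the coefficient row $(\theta_{d0},\theta_{d-1,1},\dots,\theta_{0d})$ of $p$ and whose last $d$ rows are successive shifts of the coefficient row $(d\theta_{d0},(d-1)\theta_{d-1,1},\dots,\theta_{1,d-1})$ of $p'$ (each shift moving one column to the right, zeros elsewhere). Define $D(\theta)=R(p,p')/\theta_{d0}$. Then $$\det P(\theta)=d^{\,d-2}D(\theta).$$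
   Context: $D(\theta)$ is (the paper's normalization of) the discriminant of the polynomial equation $p(x;\theta)=0$; $P(\theta)$ is the coefficient matrix of the linear system determining the highest-order derivatives of the bivariate normalizing constant in the Pfaffian system. *)

(* Defs.v *)
From mathcomp Require Import all_boot all_order all_algebra.
Set Implicit Arguments. Unset Strict Implicit. Unset Printing Implicit Defensive.
Import Order.TTheory GRing.Theory Num.Theory.
Local Open Scope ring_scope.

(* Parameters: th m := theta_{d-m,m} for m = 0..d (values for m > d are irrelevant).
   Matrices are 0-indexed: row/column k (1-based) of the paper is index k-1. *)

Definition Pmat (R : nzRingType) (d : nat) (th : nat -> R) : 'M[R]_(2 * d - 2) :=
  \matrix_(i < 2 * d - 2, j < 2 * d - 2)
    if (i < d.-1)%N then
      (if (i <= j)%N && (j - i <= d.-1)%N then (d - (j - i))%:R * th (j - i)%N else 0)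
    else
      let k := (i - d.-1)%N in
      (if (k <= j)%N && (j - k <= d.-1)%N then (j - k).+1%:R * th (j - k).+1 else 0).

Definition SylvPP' (R : nzRingType) (d : nat) (th : nat -> R) : 'M[R]_(2 * d - 1) :=
  \matrix_(i < 2 * d - 1, j < 2 * d - 1)
    if (i < d.-1)%N then
      (if (i <= j)%N && (j - i <= d)%N then th (j - i)%N else 0)
    else
      let k := (i - d.-1)%N in
      (if (k <= j)%N && (j - k <= d.-1)%N then (d - (j - k))%:R * th (j - k)%N else 0).

Definition resPP' (R : comNzRingType) (d : nat) (th : nat -> R) : R := \det (SylvPP' d th).

Definition Dtheta (R : fieldType) (d : nat) (th : nat -> R) : R := resPP' d th / th 0%N.

(* Main.v *)
Require Import Defs.
From mathcomp Require Import all_boot all_order all_algebra.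
Import Order.TTheory GRing.Theory Num.Theory.
Local Open Scope ring_scope.
From mathcomp Require Import all_fingroup.
From mathcomp Require Import zify ring lra.
Set Implicit Arguments. Unset Strict Implicit. Unset Printing Implicit Defensive.

Definition rot1 (m : nat) : 'S_(m.+1) := lift_perm ord_max ord0 1.

Lemma rot1E m (x : 'I_m.+1) : val (rot1 m x) = (x.+1 %% m.+1)%N.
Proof.
case: (eqVneq x ord_max) => [->|hx].
  by rewrite /rot1 lift_perm_id /= modnn.
have hx' : (x < m)%N by move: (ltn_ord x) hx; rewrite -val_eqE /=; lia.
have -> : x = lift ord_max (Ordinal hx') by apply: val_inj; rewrite /= /bump; case: leqP => /=; lia.
rewrite /rot1 lift_perm_lift perm1 /= /bump /= modn_small; lia.
Qed.

Lemma rotXE m k (x : 'I_m.+1) : val ((rot1 m ^+ k)%g x) = ((x + k) %% m.+1)%N.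
Proof.
rewrite permX; elim: k => [|k IH] /=; first by rewrite addn0 modn_small.
by rewrite rot1E IH -addn1 modnDml -addnA addn1.
Qed.

Lemma odd_rotX m k : odd_perm (rot1 m ^+ k)%g = odd k && odd m.
Proof.
elim: k => [|k IH]; first by rewrite expg0 odd_perm1.
rewrite expgS odd_permM IH /rot1 odd_lift_perm odd_perm1 /= addbF.
by case: (odd k); case: (odd m).
Qed.


Definition sy (R : nzRingType) (d : nat) (th : nat -> R) (i j : nat) : R :=
    if (i < d.-1)%N then
      (if (i <= j)%N && (j - i <= d)%N then th (j - i)%N else 0)
    else
      let k := (i - d.-1)%N in
      (if (k <= j)%N && (j - k <= d.-1)%N then (d - (j - k))%:R * th (j - k)%N else 0).

Definition pm (R : nzRingType) (d : nat) (th : nat -> R) (i j : nat) : R :=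
    if (i < d.-1)%N then
      (if (i <= j)%N && (j - i <= d.-1)%N then (d - (j - i))%:R * th (j - i)%N else 0)
    else
      let k := (i - d.-1)%N in
      (if (k <= j)%N && (j - k <= d.-1)%N then (j - k).+1%:R * th (j - k).+1 else 0).

Definition sp (R : nzRingType) (d : nat) (th : nat -> R) (i j : nat) : R :=
    if (i < d)%N then
      (if (i <= j)%N && (j - i <= d.-1)%N then (d - (j - i))%:R * th (j - i)%N else 0)
    else
      let k := (i - d)%N in
      (if (k < j)%N && (j - k <= d)%N then (j - k)%:R * th (j - k)%N else 0).

Definition ee (R : nzRingType) (d : nat) (r k : nat) : R :=
  if (r < d.-1)%N then d%:R * (k == r)%:R - (k == r + d.-1)%N%:R else (k == r)%:R.

Lemma sum_delta (R : nzRingType) N (f : nat -> R) a : (a < N)%N ->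
  \sum_(k < N) (k == a :> nat)%:R * f k = f a.
Proof.
move=> ha; rewrite (bigD1 (Ordinal ha)) //= eqxx mul1r big1 ?addr0 //.
move=> k hk; have -> : (k == a :> nat) = false.
  by apply/negbTE; apply: contra hk => /eqP e; apply/eqP/val_inj.
by rewrite mul0r.
Qed.

Lemma sp_pm (R : nzRingType) d (th : nat -> R) i j : (2 <= d)%N ->
  sp d th i.+1 j.+1 = pm d th i j.
Proof.
move=> hd; rewrite /sp /pm.
have -> : (i.+1 < d)%N = (i < d.-1)%N by lia.
case: ifP => hi; first by rewrite !subSS.
have -> : (i.+1 - d = i - d.-1)%N by lia.
set k := (i - d.-1)%N.
have -> : (k < j.+1)%N && (j.+1 - k <= d)%N = (k <= j)%N && (j - k <= d.-1)%N by lia.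
case: ifP => // hc.
have -> : (j.+1 - k = (j - k).+1)%N by lia.
by [].
Qed.


Lemma ee_sy (R : nzRingType) d (th : nat -> R) N r j : (2 <= d)%N -> N = (2 * d - 1)%N -> (r < N)%N ->
  \sum_(k < N) ee R d r k * sy d th k j =
  if (r < d.-1)%N then d%:R * sy d th r j - sy d th (r + d.-1) j else sy d th r j.
Proof.
move=> hd hN hr; rewrite /ee; case: ifP => hrd.
  under eq_bigr do rewrite mulrBl -mulrA.
  rewrite sumrB -mulr_sumr !(sum_delta (fun k => sy d th k j)) //; lia.
by rewrite (sum_delta (fun k => sy d th k j)).
Qed.

Lemma sp_sy (R : nzRingType) d (th : nat -> R) i j : (2 <= d)%N -> (i < 2 * d - 1)%N ->
  let r := ((i + d.-1) %% (2 * d - 1))%N in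
  sp d th i j = if (r < d.-1)%N then d%:R * sy d th r j - sy d th (r + d.-1) j else sy d th r j.
Proof.
move=> hd hi r; rewrite /sp.
case: ifP => hid.
  have hr : r = (i + d.-1)%N by rewrite /r modn_small //; lia.
  rewrite hr; have -> : (i + d.-1 < d.-1)%N = false by lia.
  rewrite /sy; have -> : (i + d.-1 < d.-1)%N = false by lia.
  by rewrite /= addnK.
have hr : r = (i - d)%N.
  rewrite /r; have -> : (i + d.-1 = (i - d) + (2 * d - 1))%N by lia.
  by rewrite modnDr modn_small //; lia.
rewrite hr; have -> : (i - d < d.-1)%N = true by lia.
rewrite /sy; have -> : (i - d < d.-1)%N = true by lia.
have -> : (i - d + d.-1 < d.-1)%N = false by lia.
rewrite /= addnK.
set k := (i - d)%N.
have [hjk|hjk] := ltnP j k.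
  have -> : (k < j)%N = false by lia.
  by rewrite /= mulr0 subr0.
have [ejk|njk] := eqVneq j k.
  by rewrite ejk ltnn subnn /= subn0 subrr.
have -> : (k < j)%N = true by rewrite ltn_neqAle eq_sym njk hjk.
rewrite /=.
have [hj2|hj2] := leqP (j - k) d.-1.
  have -> : (j - k <= d)%N = true by lia.
  rewrite -mulrBl -natrB; last by lia.
  by congr (_ * _); congr (_ %:R); lia.
have [hj3|hj3] := leqP (j - k) d.
  have ejd : (j - k = d)%N by lia.
  by rewrite /= subr0 ejd.
by rewrite /= mulr0 subr0.
Qed.


Lemma key (R : comNzRingType) d (th : nat -> R) m : (2 <= d)%N -> m.+1 = (2 * d - 1)%N ->
  d%:R ^+ d.-1 * \det (\matrix_(i < m.+1, j < m.+1) sy d th i j)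
  = d%:R * th 0%N * \det (\matrix_(i < m, j < m) pm d th i j).
Proof.
move=> hd hm.
set S := \matrix_(i < m.+1, j < m.+1) sy d th i j.
set E : 'M[R]_(m.+1) := \matrix_(r < m.+1, k < m.+1) ee R d r k.
set s := (rot1 m ^+ d.-1)%g.
have hSp : row_perm s (E *m S) = \matrix_(i < m.+1, j < m.+1) sp d th i j.
  apply/matrixP => i j; rewrite !mxE.
  under eq_bigr do rewrite !mxE.
  rewrite (ee_sy th _ hd hm (ltn_ord _)).
  rewrite sp_sy //; last by rewrite -hm.
  have hsi : nat_of_ord (s i) = ((i + d.-1) %% (2 * d - 1))%N.
    by rewrite rotXE; congr (_ %% _)%N.
  by rewrite hsi.
have detE : \det E = d%:R ^+ d.-1.
  rewrite -det_tr det_trig; last first.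
    apply/is_trig_mxP => i j hij; rewrite !mxE /ee.
    have -> : (nat_of_ord i == j) = false by apply/negbTE; rewrite neq_ltn hij.
    case: ifP => _; last by [].
    have -> : (nat_of_ord i == j + d.-1)%N = false by apply/negbTE; rewrite neq_ltn; apply/orP; left; lia.
    by rewrite mulr0 subr0.
  under eq_bigr => i _.
    rewrite !mxE /ee eqxx.
    have -> : (nat_of_ord i == i + d.-1)%N = false by apply/negbTE; rewrite neq_ltn; apply/orP; left; lia.
    rewrite mulr1 subr0.
  over.
  rewrite -big_mkcond /= -(big_ord_widen _ (fun _ => d%:R)); last by lia.
  by rewrite prodr_const card_ord.
have hodd : odd m = false.
  have -> : m = (2 * d.-1)%N by lia.
  by rewrite oddM.
have hperm : \det (row_perm s (E *m S)) = \det E * \det S.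
  by rewrite row_permE !det_mulmx det_perm odd_rotX hodd andbF expr0 mul1r.
rewrite -detE -hperm hSp (expand_det_col _ ord0) (bigD1 ord0) //= big1 ?addr0; last first.
  move=> i hi; rewrite !mxE /sp.
  have hi0 : (0 < i)%N by rewrite lt0n.
  case: ifP => _.
    by rewrite ifF ?mul0r // /=; lia.
  by rewrite /= mul0r.
rewrite !mxE /sp /cofactor /= subn0 expr0 mul1r.
have -> : (0 < d)%N by lia.
rewrite /= subn0; congr (_ * _).
congr (\det _); apply/matrixP => i j; rewrite !mxE !lift0.
exact: (sp_pm th i j hd).
Qed.

Theorem theorem6p2 (R : realFieldType) (d : nat) (th : nat -> R) :
  (2 <= d)%N -> th 0%N != 0 ->
  \det (Pmat d th) = (d%:R) ^+ (d - 2) * Dtheta d th.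
Proof.
move=> hd h0.
have hm : (2 * d - 1 = (2 * d - 2).+1)%N by lia.
have K := key th hd (esym hm).
have E1 : forall n1 n2, n1 = n2 ->
  \det (\matrix_(i < n1, j < n1) sy d th i j) = \det (\matrix_(i < n2, j < n2) sy d th i j).
  by move=> n1 n2 ->.
rewrite (E1 _ _ (esym hm)) in K.
rewrite /pm /sy in K.
rewrite /Dtheta /resPP' /SylvPP' /Pmat.
have hd0 : (d%:R : R) != 0 by rewrite pnatr_eq0; lia.
apply: (mulfI (x := d%:R * th 0%N)); first by rewrite mulf_neq0.
rewrite -K.
have -> : d.-1 = (d - 2).+1 by lia.
rewrite exprS; field.
exact: h0.
Qed.
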